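(* Let $T$ be a c.n.u. contraction on $H$. For $\lambda\in\mathbb{C}$ let $W_\lambda=\{(x,\lambda x):x\in H\}\subseteq\mathbb{H}$ and $N_\lambda=W_\lambda\cap A_T^{\perp_s}$. Then for $|\lambda|<1$, $$N_\lambda=\{((I-\lambda T^* )^{-1}f,\ \lambda(I-\lambda T^* )^{-1}f): f\in\mathbb{K}^\perp\},$$ and for $|\lambda|>1$, $$N_\lambda=\{((\lambda-T)^{-1}f,\ \lambda(\lambda-T)^{-1}f): f\in\mathbb{K}_*^\perp\}.$$
   Context: $H$ is an infinite-dimensional separable complex Hilbert space; $T\in\mathbb{B}(H)$ with $\|T\|\le1$ is completely non-unitary (no nonzero invariant subspace on which $T$ is unitary). $\mathbb{K}=\ker(I-T^*T)$, $\mathbb{K}_*=\ker(I-TT^* )$. $\mathbb{H}=H\oplus_\perp H$ with $[(x_1,x_2),(y_1,y_2)]=i(x_1,y_1)_H-i(x_2,y_2)_H$; $S^{\perp_s}=\{a:[a,b]=0\ \forall b\in S\}$; $A_T=\{(x,Tx):x\in\mathbb{K}\}$. *)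

(* Defs.v *)
(* Complex Hilbert spaces are set up by hand:
   H is a complete normed module over C := R[i] (R : realType) whose norm
   comes from an inner product ip (linear in the first argument,
   conjugate-linear in the second). *)
From HB Require Import structures.
From mathcomp Require Import all_boot all_order all_algebra.
From mathcomp Require Import all_classical all_reals all_analysis.
From mathcomp Require Import complex.
Set Implicit Arguments. Unset Strict Implicit. Unset Printing Implicit Defensive.
Import Order.TTheory GRing.Theory Num.Theory.
Import numFieldNormedType.Exports.
Local Open Scope classical_set_scope.
Local Open Scope ring_scope.

Section Hilbert.
Variable R : realType.
Local Notation C := (R[i]).
Variable H : completeNormedModType C.

Definition is_inner_product (ip : H -> H -> C) : Prop :=
  [/\ forall (a : C) (x y z : H), ip (a *: x + y) z = a * ip x z + ip y z,
      forall x y : H, ip y x = (ip x y)^* &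
      forall x : H, ip x x = `|x| ^+ 2].

Definition separable : Prop :=
  exists D : set H, countable D /\ closure D = setT.

Definition infinite_dimensional : Prop :=
  forall s : seq H, exists x : H,
    forall c : seq C, x <> \sum_(j < size s) c`_j *: s`_j.

Definition is_adjoint (ip : H -> H -> C) (T Ts : H -> H) : Prop :=
  forall x y : H, ip (T x) y = ip x (Ts y).

Definition closed_subspace (M : set H) : Prop :=
  [/\ M 0, (forall x y, M x -> M y -> M (x + y)),
      (forall (a : C) x, M x -> M (a *: x)) & closed M].

Definition completely_non_unitary (T : H -> H) : Prop :=
  forall M : set H, closed_subspace M ->
    T @` M `<=` M -> M `<=` T @` M ->
    (forall x, M x -> `|T x| = `|x|) ->
    M `<=` [set 0].

Definition orth (ip : H -> H -> C) (S : set H) : set H :=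
  [set f | forall k, S k -> ip f k = 0].

(* K = ker (I - T* T), K_* = ker (I - T T* ) *)
Definition defect_ker (T Ts : H -> H) : set H := [set x | x - Ts (T x) = 0].
Definition defect_ker_star (T Ts : H -> H) : set H := [set x | x - T (Ts x) = 0].

Definition sform (ip : H -> H -> C) (a b : H * H) : C :=
  'i * ip a.1 b.1 - 'i * ip a.2 b.2.

Definition sorth (ip : H -> H -> C) (S : set (H * H)) : set (H * H) :=
  [set a | forall b, S b -> sform ip a b = 0].

Definition A_T (T Ts : H -> H) : set (H * H) :=
  [set (x, T x) | x in defect_ker T Ts].

Definition W_ (l : C) : set (H * H) := [set (x, l *: x) | x in [set: H]].

Definition N_ (ip : H -> H -> C) (T Ts : H -> H) (l : C) : set (H * H) :=
  W_ l `&` sorth ip (A_T T Ts).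

End Hilbert.

(* Main.v *)
Require Import Defs.
From HB Require Import structures.
From mathcomp Require Import all_boot all_order all_algebra.
From mathcomp Require Import all_classical all_reals all_analysis.
From mathcomp Require Import complex.
From mathcomp Require Import ring.
Import Order.TTheory GRing.Theory Num.Theory.
Import numFieldNormedType.Exports.
Local Open Scope classical_set_scope.
Local Open Scope ring_scope.

Lemma small_pow (R : realType) (q e : R[i]) :
  0 <= q -> q < 1 -> 0 < e -> exists N : nat, q ^+ N < e.
Proof.
case: q => a b; case: e => c d.
rewrite !lecE !ltcE /= => /andP[/eqP b0 a0] /andP[/eqP _ a1] /andP[/eqP d0 c0].
subst b d.
have : `|a| < 1 by rewrite ger0_norm.
move=> /cvg_expr /cvgrPdist_lt /(_ c c0) [N _ HN].
exists N.
have := HN N (leqnn N); rewrite sub0r normrN => hN.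
have aN : a ^+ N < c by apply: le_lt_trans hN; exact: ler_norm.
have -> : Complex a 0 = real_complex R a by [].
have -> : Complex c 0 = real_complex R c by [].
rewrite -rmorphXn.
by rewrite ltcR.
Qed.

Lemma neumann (R : realType) (H : completeNormedModType R[i]) (S : H -> H) (q : R[i]) :
  (forall x y, S (x - y) = S x - S y) -> 0 <= q -> q < 1 ->
  (forall x, `|S x| <= q * `|x|) -> forall f, exists x, x - S x = f.
Proof.
move=> SB q0 q1 Sb f.
have S0 : S 0 = 0 by move: (SB 0 0); rewrite !subrr.
have q1' : 0 < 1 - q by rewrite subr_gt0.
pose y n := iter n (fun x => f + S x) 0.
have yS n : y n.+1 = f + S (y n) by rewrite /y iterS.
have d n : `|y n.+1 - y n| <= q ^+ n * `|f|.
  elim: n => [|n IH]; first by rewrite /= S0 addr0 subr0 expr0 mul1r.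
  rewrite (_ : y n.+2 - y n.+1 = S (y n.+1 - y n)); last first.
    by rewrite SB [y n.+2]yS [y n.+1 in LHS]yS opprD addrACA subrr add0r.
  apply: le_trans (Sb _) _; rewrite exprS -mulrA; apply: ler_pM => //; exact: normr_ge0.
have D n m : (1 - q) * `|y (n + m)%N - y n| <= q ^+ n * (1 - q ^+ m) * `|f|.
  elim: m => [|m IH].
    by rewrite addn0 subrr normr0 mulr0 expr0 subrr mulr0 mul0r.
  rewrite addnS.
  apply: le_trans (ler_wpM2l (ltW q1') (ler_distD (y (n+m)%N) _ _)) _.
  rewrite mulrDr.
  apply: le_trans (lerD (ler_wpM2l (ltW q1') (d (n+m)%N)) IH) _.
  rewrite le_eqVlt; apply/orP; left; apply/eqP; rewrite exprS exprD; ring.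
have D' n m : (1 - q) * `|y (n + m)%N - y n| <= q ^+ n * `|f|.
  apply: le_trans (D n m) _; apply: ler_wpM2r; first exact: normr_ge0.
  rewrite -[leRHS]mulr1; apply: ler_wpM2l; first exact: exprn_ge0.
  by rewrite gerBl exprn_ge0.
have cy : cvgn y.
  apply/cauchy_cvgP; apply/cauchy_ballP => e e0; near_simpl.
  have pos : 0 < e * (1 - q) / (`|f| + 1).
    by rewrite divr_gt0 ?mulr_gt0 // ltr_wpDl.
  have [N hN] := @small_pow _ _ _ q0 q1 pos.
  exists ([set n | (N <= n)%N], [set n | (N <= n)%N]); first by split; exists N.
  move=> [n m] [/= Nn Nm]; rewrite -ball_normE /=.
  have key : forall a b, (N <= a)%N -> (a <= b)%N -> `|y a - y b| < e.
    move=> a b Na ab.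
    rewrite distrC -(subnKC ab) -(ltr_pM2l q1') [X in _ < X]mulrC.
    apply: le_lt_trans (D' _ _) _.
    apply: (@le_lt_trans _ _ (q ^+ N * (`|f| + 1))).
      apply: ler_pM; [exact: exprn_ge0|exact: normr_ge0| |].
        exact: ler_wiXn2l q0 (ltW q1) _ _ Na.
      by rewrite lerDl.
    by rewrite -ltr_pdivlMr ?ltr_wpDl.
  case: (leqP n m) => nm; first exact: key.
  rewrite distrC; apply: key => //; exact: ltnW.
set x := lim _ in cy.
have Sc : {for x, continuous S}.
  apply/cvgrPdist_lt => eps eps0.
  have dpos : 0 < eps / (q + 1) by rewrite divr_gt0 // ltr_wpDl.
  apply: filterS ((cvgrPdist_lt id x).1 cvg_id _ dpos) => z hz.
  rewrite -SB; apply: le_lt_trans (Sb _) _.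
  apply: (@le_lt_trans _ _ ((q + 1) * `|x - z|)).
    by apply: ler_wpM2r; [exact: normr_ge0|rewrite lerDl].
  by rewrite mulrC -ltr_pdivlMr // ltr_wpDl.
have h1 : [sequence y n.+1]_n @ \oo --> x by rewrite cvg_shiftS.
have h2 : [sequence y n.+1]_n @ \oo --> f + S x.
  apply: cvgD; first exact: cvg_cst.
  exact: (continuous_cvg _ Sc cy).
exists x; have hx : x = f + S x by exact: (cvg_unique (@norm_hausdorff _ _) h1 h2).
by rewrite {1}hx addrK.
Unshelve. all: end_near.
Qed.

Lemma subrBB' (V : zmodType) (a b c d : V) : (a - b) - (c - d) = (a - c) - (b - d).
Proof.
by rewrite opprB addrACA [in RHS]opprB [in RHS]addrACA [- c + _]addrC.
Qed.

Lemma inv_of (V : zmodType) (A : V -> V) :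
  (forall x y, A (x - y) = A x - A y) -> (forall f, exists x, A x = f) ->
  (forall x, A x = 0 -> x = 0) ->
  exists Rl : V -> V, (forall x, Rl (A x) = x) /\ (forall f, A (Rl f) = f).
Proof.
move=> AB As Ai; have [Rl hRl] := choice As.
exists Rl; split => // x; apply/eqP; rewrite -subr_eq0; apply/eqP/Ai.
by rewrite AB hRl subrr.
Qed.

Lemma norm_small (R : realType) (H : normedModType R[i]) (x : H) (c : R[i]) :
  c < 1 -> `|x| <= c * `|x| -> x = 0.
Proof.
move=> c1 h; apply/eqP; rewrite -normr_le0.
have : (1 - c) * `|x| <= 0 by rewrite mulrBl mul1r subr_le0.
by rewrite pmulr_rle0 // subr_gt0.
Qed.

Theorem proposition4p4 (R : realType) (H : completeNormedModType R[i])
  (ip : H -> H -> R[i]) (T Ts : {linear H -> H}) :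
  is_inner_product ip ->
  separable H -> infinite_dimensional H ->
  continuous T ->
  (forall x : H, `|T x| <= `|x|) ->
  is_adjoint ip T Ts ->
  completely_non_unitary T ->
  (forall l : R[i], `|l| < 1 ->
     exists Rl : H -> H,
       (forall x, Rl (x - l *: Ts x) = x) /\ (forall f, Rl f - l *: Ts (Rl f) = f) /\
       N_ ip T Ts l = [set (Rl f, l *: Rl f) | f in orth ip (defect_ker T Ts)]) /\
  (forall l : R[i], 1 < `|l| ->
     exists Rl : H -> H,
       (forall x, Rl (l *: x - T x) = x) /\ (forall f, l *: Rl f - T (Rl f) = f) /\
       N_ ip T Ts l = [set (Rl f, l *: Rl f) | f in orth ip (defect_ker_star T Ts)]).
Proof.
move=> [hl hc hn] _ _ _ Tb adj _.
have ip0l z : ip 0 z = 0.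
  have := hl 1 0 0 z; rewrite scale1r mul1r addr0 => h.
  by apply: (addrI (ip 0 z)); rewrite addr0 -h.
have ipZl a x z : ip (a *: x) z = a * ip x z.
  by have := hl a x 0 z; rewrite addr0 ip0l addr0.
have ipDl x y z : ip (x + y) z = ip x z + ip y z.
  by have := hl 1 x y z; rewrite scale1r mul1r.
have ipBl x y z : ip (x - y) z = ip x z - ip y z.
  by rewrite ipDl -scaleN1r ipZl mulN1r.
have ipDr x y z : ip z (x + y) = ip z x + ip z y.
  by rewrite hc ipDl rmorphD /= -!hc.
have ipBr x y z : ip z (x - y) = ip z x - ip z y.
  by rewrite hc ipBl rmorphB /= -!hc.
have ipT x k : ip x (T k) = ip (Ts x) k by rewrite hc adj -hc.
have Tsb y : `|Ts y| <= `|y|.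
  set u := Ts y.
  have e1 : ip (T u) y = `|u| ^+ 2 by rewrite adj hn.
  have e2 : ip y (T u) = `|u| ^+ 2.
    by rewrite hc e1 conj_Creal // ger0_real // exprn_ge0.
  have h : 0 <= `|T u| ^+ 2 - `|u| ^+ 2 - `|u| ^+ 2 + `|y| ^+ 2.
    have E : ip (T u - y) (T u - y) =
        `|T u| ^+ 2 - `|u| ^+ 2 - `|u| ^+ 2 + `|y| ^+ 2.
      by rewrite ipBl !ipBr e1 e2 !hn; ring.
    by rewrite -E hn exprn_ge0.
  have h2 : `|T u| ^+ 2 <= `|u| ^+ 2.
    by rewrite (ler_pXn2r (_ : (0 < 2)%N)) ?nnegrE ?normr_ge0 ?Tb.
  have : 0 <= `|y| ^+ 2 - `|u| ^+ 2.
    apply: le_trans h _.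
    rewrite (_ : _ - _ - _ + _ = (`|y| ^+ 2 - `|u| ^+ 2) + (`|T u| ^+ 2 - `|u| ^+ 2)).
      by rewrite gerDl subr_le0.
    by ring.
  by rewrite subr_ge0 (ler_pXn2r (_ : (0 < 2)%N)) ?nnegrE ?normr_ge0.
split.
- move=> l l1.
  have l0 : 0 <= `|l| by exact: normr_ge0.
  have [Rl [hA hR]] : exists Rl : H -> H,
      (forall x, Rl (x - l *: Ts x) = x) /\ (forall f, Rl f - l *: Ts (Rl f) = f).
    apply: (@inv_of _ (fun x => x - l *: Ts x)).
    - by move=> x y; rewrite linearB scalerBr subrBB'.
    - apply: (@neumann _ _ (fun x => l *: Ts x) `|l|) => //.
        by move=> x y; rewrite linearB scalerBr.
      by move=> x; rewrite normrZ ler_wpM2l.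
    - move=> x /eqP; rewrite subr_eq0 => /eqP hx.
      apply: (@norm_small _ _ _ _ l1); rewrite {1}hx normrZ ler_wpM2l //.
  exists Rl; split => //; split => //.
  apply/seteqP; split => p.
  + move=> [[x _ <-] hs].
    exists (x - l *: Ts x); last by rewrite hA.
    move=> k Kk.
    have := hs (k, T k) (ex_intro2 _ _ k Kk erefl).
    rewrite /sform /= ipZl ipT -mulrBr => /eqP; rewrite mulf_eq0 (negbTE (@neq0Ci _)) /=.
    by rewrite ipBl ipZl => /eqP.
  + move=> [f hf <-]; split; first by exists (Rl f).
    move=> b [k Kk <-]; rewrite /sform /= ipZl ipT -mulrBr -ipZl -ipBl hR.
    by rewrite (hf k Kk) mulr0.
- move=> l l1.
  have lpos : 0 < `|l| by apply: lt_trans l1.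
  have ln0 : l != 0 by rewrite -normr_gt0.
  have [Rl [hA hR]] : exists Rl : H -> H,
      (forall x, Rl (l *: x - T x) = x) /\ (forall f, l *: Rl f - T (Rl f) = f).
    apply: (@inv_of _ (fun x => l *: x - T x)).
    - by move=> x y; rewrite scalerBr linearB subrBB'.
    - move=> f.
      have [x hx] := @neumann _ _ (fun x => l^-1 *: T x) `|l^-1|
        (fun x y => ltac:(by rewrite /= linearB scalerBr)) (normr_ge0 _)
        ltac:(by rewrite normfV invf_lt1)
        (fun x => ltac:(by rewrite /= normrZ ler_wpM2l)) (l^-1 *: f).
      exists x; have := congr1 (fun v => l *: v) hx.
      by rewrite /= scalerBr !scalerA mulfV // !scale1r.
    - move=> x /eqP; rewrite subr_eq0 => /eqP hx.
      have hx' : x = l^-1 *: T x by rewrite -hx scalerA mulVf // scale1r.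
      apply: (@norm_small _ _ _ `|l^-1|); first by rewrite normfV invf_lt1.
      by rewrite {1}hx' normrZ ler_wpM2l.
  exists Rl; split => //; split => //.
  apply/seteqP; split => p.
  + move=> [[x _ <-] hs].
    exists (l *: x - T x); last by rewrite hA.
    move=> m Km.
    have Tk : T (Ts m) = m by apply/esym/subr0_eq.
    have Kk : defect_ker T Ts (Ts m).
      by rewrite /defect_ker /= -linearB Km linear0.
    have := hs (Ts m, T (Ts m)) (ex_intro2 _ _ (Ts m) Kk erefl).
    rewrite /sform /= ipZl Tk -mulrBr => /eqP; rewrite mulf_eq0 (negbTE (@neq0Ci _)) /=.
    move=> /eqP h.
    by rewrite ipBl ipZl adj -opprB h oppr0.
  + move=> [f hf <-]; split; first by exists (Rl f).
    move=> b [k Kk <-].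
    have kk : Ts (T k) = k by apply/esym/subr0_eq.
    have Km : defect_ker_star T Ts (T k).
      by rewrite /defect_ker_star /= kk subrr.
    rewrite /sform /=.
    have -> : ip (Rl f) k = ip (T (Rl f)) (T k) by rewrite adj kk.
    rewrite ipZl -mulrBr -ipZl -opprB -ipBl hR (hf _ Km) oppr0 mulr0.
    by [].
Qed.
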